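(* Let $r:\mathbb{R}_+\to\mathbb{R}_+$ be concave and strictly increasing with $r(z)<1/2$ for all $z\in\mathbb{R}_+$. For each integer $i\ge1$ let $C^i\subseteq\mathbb{R}^n$ be a closed convex set with $\mathbf 0\in C^i$ and \[ \Big\{\mathbf x\in\mathbb{R}^n:\ \|\mathbf x\|_2\le\tfrac{r(i-1)+r(i+1)}{2}\Big\}\subseteq C^i\subseteq\{\mathbf x\in\mathbb{R}^n:\ \|\mathbf x\|_2\le r(i)\}. \] Then $S=\bigcup_{i=1}^\infty\big(C^i+i\,\mathbf e(1)\big)$ is a rational MICP representable set, and the sets $C^i+i\,\mathbf e(1)$, $i\ge1$, are pairwise disjoint.
   Context: $\mathbf e(1)$ denotes the first standard unit vector of $\mathbb{R}^n$. A set $S\subseteq\mathbb{R}^n$ is MICP representable if there is a closed convex $M\subseteq\mathbb{R}^{n+p+d}$ (variables $(\mathbf x,\mathbf y,\mathbf z)$, $\mathbf x\in\mathbb{R}^n,\mathbf y\in\mathbb{R}^p,\mathbf z\in\mathbb{R}^d$) such that $\mathbf x\in S$ iff there exist $\mathbf y\in\mathbb{R}^p$, $\mathbf z\in\mathbb{Z}^d$ with $(\mathbf x,\mathbf y,\mathbf z)\in M$. It is rational MICP representable if such an $M$ exists with $\operatorname{proj}_{\mathbf z}(M)$ rationally unbounded, where $I\subseteq\mathbb{R}^d$ is rationally unbounded if for every image $I'\subseteq\mathbb{R}^{d'}$ of $I$ under a rational affine map, either $I'$ is bounded or its recession cone $I'_\infty=\{\mathbf r:\ \mathbf x+\lambda\mathbf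 r\in I'\ \forall\mathbf x\in I',\lambda\ge0\}$ contains a nonzero integer vector. *)

(* Defs.v *)
From HB Require Import structures.
From mathcomp Require Import all_boot all_order all_algebra.
From mathcomp Require Import all_classical all_reals all_analysis.
Set Implicit Arguments. Unset Strict Implicit. Unset Printing Implicit Defensive.
Import Order.TTheory GRing.Theory Num.Theory.
Import numFieldNormedType.Exports.
Local Open Scope ring_scope.
Local Open Scope classical_set_scope.

Section Defs.
Variable R : realType.

Definition int_vec k (z : 'rV[R]_k) : Prop := forall j, z 0 j \is a Num.int.

Definition norm2 k (x : 'rV[R]_k) : R := Num.sqrt (\sum_j x 0 j ^+ 2).

(* first standard unit vector e(1) (index 0 in Rocq) *)
Definition e1 k : 'rV[R]_k := \row_(j < k) (nat_of_ord j == 0%N)%:R.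

Definition bounded_vset k (A : set 'rV[R]_k) : Prop :=
  exists M : R, forall x, A x -> forall j, `|x 0 j| <= M.

Definition recession_cone k (A : set 'rV[R]_k) : set 'rV[R]_k :=
  [set r | forall x (lam : R), A x -> 0 <= lam -> A (x + lam *: r)].

Definition rat_affine_image d d' (A : 'M[rat]_(d, d')) (b : 'rV[rat]_d')
  (I : set 'rV[R]_d) : set 'rV[R]_d' :=
  [set z *m map_mx ratr A + map_mx ratr b | z in I].

Definition rationally_unbounded d (I : set 'rV[R]_d) : Prop :=
  forall d' (A : 'M[rat]_(d, d')) (b : 'rV[rat]_d'),
    let I' := rat_affine_image A b I in
    bounded_vset I' \/ exists r, recession_cone I' r /\ r != 0 /\ int_vec r.

Definition xyz n p d (x : 'rV[R]_n) (y : 'rV[R]_p) (z : 'rV[R]_d)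
  : 'rV[R]_(n + p + d) := row_mx (row_mx x y) z.

Definition proj_z n p d (M : set 'rV[R]_(n + p + d)) : set 'rV[R]_d :=
  [set z | exists x y, M (xyz x y z)].

Definition MICP_representation n p d (S : set 'rV[R]_n)
  (M : set 'rV[R]_(n + p + d)) : Prop :=
  closed M /\ convex_set M /\
  forall x, S x <-> exists y z, int_vec z /\ M (xyz x y z).

Definition MICP_representable n (S : set 'rV[R]_n) : Prop :=
  exists p d (M : set 'rV[R]_(n + p + d)), MICP_representation S M.

Definition rational_MICP_representable n (S : set 'rV[R]_n) : Prop :=
  exists p d (M : set 'rV[R]_(n + p + d)),
    MICP_representation S M /\ rationally_unbounded (proj_z M).

End Defs.

(* Main.v *)
Require Import Defs.
From HB Require Import structures.
From mathcomp Require Import all_boot all_order all_algebra.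
From mathcomp Require Import all_classical all_reals all_analysis.
From mathcomp Require Import ring lra.
Import Order.TTheory GRing.Theory Num.Theory.
Import numFieldNormedType.Exports.
Local Open Scope ring_scope.
Local Open Scope classical_set_scope.

Section Reals.
Variable R : realType.
Variable r : R -> R.
Hypothesis r_nonneg : forall z, 0 <= z -> 0 <= r z.
Hypothesis r_incr : forall z w, 0 <= z -> z < w -> r z < r w.
Hypothesis r_concave : forall z w (t : R), 0 <= z -> 0 <= w -> 0 <= t -> t <= 1 ->
      t * r z + (1 - t) * r w <= r (t * z + (1 - t) * w).

Lemma chord x y w : 0 <= x -> x <= y -> y <= w ->
  (w - y) * r x + (y - x) * r w <= (w - x) * r y.
Proof.
move=> x0 xy yw.
have [xw|xw] := eqVneq x w.
  have xy' : x = y by apply/eqP; rewrite eq_le; apply/andP; split; lra.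
  by rewrite -xy' xw !subrr !mul0r addr0.
have wx : 0 < w - x by rewrite subr_gt0 lt_neqAle xw (le_trans xy yw).
have [t ht] : exists t, t = (w - y) / (w - x) by eexists.
have ew : w - y = t * (w - x) by rewrite ht divfK // gt_eqF.
have t0 : 0 <= t by rewrite ht divr_ge0 //; lra.
have t1 : t <= 1 by rewrite ht ler_pdivrMr // mul1r; lra.
have := @r_concave x w t x0 (le_trans x0 (le_trans xy yw)) t0 t1.
have -> : t * x + (1 - t) * w = y.
  suff : w - y = w - (t * x + (1 - t) * w) by lra.
  rewrite ew; ring.
move=> H.
have ey : y - x = (1 - t) * (w - x) by lra.
rewrite ew ey.
have -> : t * (w - x) * r x + (1 - t) * (w - x) * r w = (w - x) * (t * r x + (1 - t) * r w) by ring.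
by rewrite ler_pM2l.
Qed.

Definition La k := r (k.-1)%:R.
Definition Lb k := r (k.+1)%:R.
Definition rho k := (La k + Lb k) / 2.
Definition L k (z : R) := rho k + (z - k%:R) * ((Lb k - La k) / 2).

Lemma ab k : La k < Lb k.
Proof. apply: r_incr => //; rewrite ltr_nat; case: k => //= k; by rewrite ltnS. Qed.

Lemma rho_gt0 k : 0 < rho k.
Proof.
rewrite /rho divr_gt0 //; have := ab k; have : 0 <= La k by exact: r_nonneg.
move=> *; lra.
Qed.

Lemma L_ge k j : (1 <= k)%N -> (j + 1 <= k)%N \/ (k + 1 <= j)%N -> r j%:R <= L k j%:R.
Proof.
case: k => // k _; rewrite /L /rho /La /Lb /= => jk.
have K0 : 0 <= k%:R :> R by [].
have J0 : 0 <= j%:R :> R by [].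
have eS : k.+1%:R = k%:R + 1 :> R by rewrite -natr1.
have eSS : k.+2%:R = k%:R + 2 :> R by rewrite -natr1 eS; ring.
case: jk => jk.
- have jk' : j%:R <= k%:R :> R by rewrite ler_nat -ltnS -addn1.
  have := @chord j%:R k%:R k.+2%:R J0 jk'.
  rewrite eSS => /(_ ltac:(lra)).
  rewrite ?eS ?eSS; nra.
- have jk' : k%:R + 2 <= j%:R :> R by rewrite -eSS ler_nat -addn1.
  have := @chord k%:R k.+2%:R j%:R K0.
  rewrite eSS => /(_ ltac:(lra) jk').
  rewrite ?eS ?eSS; nra.
Qed.

Lemma L_1_gt0 k : (1 <= k)%N -> 0 < L k 1.
Proof.
case: k => // -[_|k _].
  by rewrite /L subrr mul0r addr0 rho_gt0.
have := @L_ge k.+2 1 isT (or_introl isT).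
have := @r_incr 0 1 (lexx _) ltr01.
have := @r_nonneg 0 (lexx _).
move=> *; lra.
Qed.

Lemma slope_ge0 k : 0 <= (Lb k - La k) / 2.
Proof. by rewrite divr_ge0 // subr_ge0 ltW // ab. Qed.

Lemma L_le k z w : z <= w -> L k z <= L k w.
Proof. by move=> zw; rewrite /L lerD2l ler_wpM2r ?slope_ge0 // lerB. Qed.

Lemma L_kk k : L k k%:R = rho k.
Proof. by rewrite /L subrr mul0r addr0. Qed.

Lemma L_aff k t z w : L k (t * z + (1 - t) * w) = t * L k z + (1 - t) * L k w.
Proof. rewrite /L; ring. Qed.

Lemma norm2Z k (a : R) (x : 'rV[R]_k) : norm2 (a *: x) = `|a| * norm2 x.
Proof.
rewrite /norm2 (eq_bigr (fun j => a ^+ 2 * x 0 j ^+ 2)); last first.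
  by move=> j _; rewrite mxE exprMn.
by rewrite -mulr_sumr sqrtrM ?sqr_ge0 // sqrtr_sqr.
Qed.

Lemma norm2_coord k (x : 'rV[R]_k) j : `|x 0 j| <= norm2 x.
Proof.
rewrite /norm2 -sqrtr_sqr ler_sqrt; last by rewrite sumr_ge0 // => i _; rewrite sqr_ge0.
by rewrite (bigD1 j) //= lerDl sumr_ge0 // => i _; rewrite sqr_ge0.
Qed.

Variable n : nat.
Variable C : nat -> set 'rV[R]_n.
Hypothesis C_closed : forall i, (1 <= i)%N -> closed (C i).
Hypothesis C_convex : forall i, (1 <= i)%N -> convex_set (C i).
Hypothesis C_0 : forall i, (1 <= i)%N -> C i 0.

Definition zc (v : 'rV[R]_(n + 0 + 1)) : R := v 0 (rshift (n + 0) 0).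
Definition uc (v : 'rV[R]_(n + 0 + 1)) : 'rV[R]_n := lsubmx (lsubmx v) - zc v *: e1 R n.
Definition den k (z : R) := Num.max (L k z) (L k 1).
Definition gk k (v : 'rV[R]_(n + 0 + 1)) := (rho k / den k (zc v)) *: uc v.
Definition Mset := [set v | 1 <= zc v /\ forall k, (1 <= k)%N -> C k (gk k v)].

Lemma zc_cont : continuous zc.
Proof. exact: coord_continuous. Qed.

Lemma uc_cont : continuous uc.
Proof.
move=> v; apply: (@continuousB _ _ _ (fun v => lsubmx (lsubmx v)) (fun v => zc v *: e1 R n)).
  apply: continuous_comp; last exact: continuous_lsubmx.
  exact: continuous_lsubmx.
by apply: continuousZr_tmp; exact: zc_cont.
Qed.

Lemma den_pos k z : (1 <= k)%N -> 0 < den k z.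
Proof. by move=> k1; rewrite /den lt_max L_1_gt0 // orbT. Qed.

Lemma gk_cont k : (1 <= k)%N -> continuous (gk k).
Proof.
move=> k1 v; apply: (@continuousZ _ _ _ (fun v => rho k / den k (zc v)) uc); last exact: uc_cont.
apply: (@continuousM _ _ (fun _ => rho k) (fun v => (den k (zc v))^-1)); first exact: cst_continuous.
apply: (@continuousV _ _ (fun v => den k (zc v))); first by rewrite gt_eqF // den_pos.
rewrite /den.
apply: (@continuous_comp _ _ _ zc (fun z : R => Num.max (L k z) (L k 1)) v); first exact: zc_cont.
apply: (@continuous_max R R (fun z => L k z) (fun _ => L k 1)); last exact: cst_continuous.
rewrite /L; apply: continuousD; first exact: cst_continuous.
apply: continuousM; last exact: cst_continuous.
by apply: continuousB; [exact: cvg_id| exact: cvg_cst].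
Qed.

Lemma Mset_closed : closed Mset.
Proof.
have -> : Mset = zc @^-1` [set x | 1 <= x] `&`
   \bigcap_(k in [set k | (1 <= k)%N]) (gk k @^-1` C k).
  by apply/seteqP; split => v /= [H1 H2]; split => // k /H2.
apply: closedI.
  by apply: preimage_closed; [move=> v _; exact: zc_cont | exact: closed_ge].
apply: closed_bigI => k k1.
by apply: preimage_closed; [move=> v _; exact: gk_cont | exact: C_closed].
Qed.

Lemma convex_setP k (A : set 'rV[R]_k) : convex_set A <->
  forall x y (t : R), 0 <= t -> t <= 1 -> A x -> A y -> A (t *: x + (1 - t) *: y).
Proof.
split.
- move=> cA x y t t0 t1 Ax Ay.
  have P : Itv.spec (@Itv.num_sem R) (Itv.Real (Interval (BLeft 0%Z) (BRight 1%Z))) t.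
    rewrite /= /Itv.num_sem /=. rewrite num_real /=. 

    all: rewrite ?in_itv /= ?t0 ?t1 //.
  have := cA x y (Itv.Def P); rewrite !inE => /(_ Ax Ay).
  by [].
- move=> H x y l; rewrite !inE => Ax Ay.
  by apply: H => //; rewrite ?ge0 ?le1.
Qed.

Lemma zc_lin t v1 v2 : zc (t *: v1 + (1 - t) *: v2) = t * zc v1 + (1 - t) * zc v2.
Proof. by rewrite /zc !mxE. Qed.

Lemma uc_lin t v1 v2 : uc (t *: v1 + (1 - t) *: v2) = t *: uc v1 + (1 - t) *: uc v2.
Proof.
rewrite /uc zc_lin; apply/rowP => j; rewrite !mxE; ring.
Qed.

Lemma den_L k z : 1 <= z -> den k z = L k z.
Proof. by move=> z1; rewrite /den max_l // L_le. Qed.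

Lemma Mset_convex : convex_set Mset.
Proof.
apply/convex_setP => v1 v2 t t0 t1 [z1 H1] [z2 H2]; split.
  by rewrite zc_lin; nra.
move=> k k1.
have Lp1 : 0 < L k (zc v1) by rewrite -den_L // den_pos.
have Lp2 : 0 < L k (zc v2) by rewrite -den_L // den_pos.
have rp := rho_gt0 k.
set L1 := L k (zc v1) in Lp1 *; set L2 := L k (zc v2) in Lp2 *.
have Lzp : 0 < t * L1 + (1 - t) * L2 by nra.
pose t' := t * L1 / (t * L1 + (1 - t) * L2).
have t'0 : 0 <= t' by rewrite /t' divr_ge0 //; [nra | exact: ltW].
have t'1 : t' <= 1 by rewrite /t' ler_pdivrMr // mul1r; nra.
have := (proj1 (@convex_setP n (C k)) (@C_convex k k1)) _ _ t' t'0 t'1 (H1 k k1) (H2 k k1).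
suff -> : gk k (t *: v1 + (1 - t) *: v2) =
  t' *: gk k v1 + (1 - t') *: gk k v2 by [].
have e1' : 1 - t' = (1 - t) * L2 / (t * L1 + (1 - t) * L2).
  rewrite /t'; field; by rewrite gt_eqF.
rewrite e1' /t' /gk uc_lin !den_L ?zc_lin //; last by nra.
rewrite L_aff -/L1 -/L2 scalerDr !scalerA.
congr (_ *: _ + _ *: _); field; rewrite ?gt_eqF //.
Qed.

Hypothesis C_inner : forall i, (1 <= i)%N -> forall x,
      norm2 x <= (r (i.-1)%:R + r (i.+1)%:R) / 2 -> C i x.
Hypothesis C_outer : forall i, (1 <= i)%N -> forall x, C i x -> norm2 x <= r i%:R.

Lemma zc_xyz x (y : 'rV[R]_0) (z : 'rV[R]_1) : zc (xyz x y z) = z 0 0.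
Proof. by rewrite /zc /xyz row_mxEr. Qed.

Lemma uc_xyz x (y : 'rV[R]_0) (z : 'rV[R]_1) : uc (xyz x y z) = x - z 0 0 *: e1 R n.
Proof. by rewrite /uc zc_xyz /xyz !row_mxKl. Qed.

Lemma den_kk k : (1 <= k)%N -> den k k%:R = rho k.
Proof. by move=> k1; rewrite den_L ?L_kk // ler1n. Qed.

Lemma key i c : (1 <= i)%N -> C i c -> forall k, (1 <= k)%N -> C k ((rho k / den k i%:R) *: c).
Proof.
move=> i1 Cc k k1.
have [->|ki] := eqVneq k i.
  by rewrite den_kk // divff ?gt_eqF ?rho_gt0 // scale1r.
apply: C_inner => //.
have Lp : 0 < L k i%:R by rewrite -den_L ?ler1n // den_pos.
rewrite norm2Z den_L ?ler1n // ger0_norm ?divr_ge0 ?(ltW Lp) ?(ltW (rho_gt0 _)) //.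
have : r i%:R <= L k i%:R.
  apply: L_ge => //.
  by case: (ltngtP i k) ki => // H _; [left|right]; rewrite addn1.
have := @C_outer i i1 c Cc.
have := rho_gt0 k.
have : 0 <= norm2 c by rewrite /norm2 sqrtr_ge0.
rewrite -/(rho k).
move=> h0 h1 h2 h3.
rewrite mulrAC ler_pdivrMr // ler_pM2l //.
exact: le_trans h2 h3.
by rewrite addr_ge0 // r_nonneg.
Qed.

Lemma int_ge1 (a : R) : a \is a Num.int -> 1 <= a -> exists i, (1 <= i)%N /\ a = i%:R.
Proof.
move=> ai a1.
have a0 : 0 <= a by apply: le_trans a1.
move: ai a1; rewrite intrEge0 // => /natrP [i ->] a1; exists i; split => //.
by move: a1; rewrite ler1n.
Qed.

Lemma repr_iff x : (exists i, (1 <= i)%N /\ exists c, C i c /\ x = c + i%:R *: e1 R n) <->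
  exists (y : 'rV[R]_0) (z : 'rV[R]_1), int_vec z /\ Mset (xyz x y z).
Proof.
split.
- move=> [i [i1 [c [Cc ->]]]].
  exists 0, (const_mx i%:R); split.
    by move=> j; rewrite mxE natr_int.
  rewrite /Mset /= /gk zc_xyz uc_xyz mxE addrK; split; first by rewrite ler1n.
  by move=> k k1; apply: key.
- move=> [y [z [zi [z1 H]]]].
  rewrite zc_xyz in z1.
  have [i [i1 ei]] := @int_ge1 (z 0 0) (zi 0) z1.
  exists i; split => //; exists (x - i%:R *: e1 R n); split; last by rewrite subrK.
  have := H i i1; rewrite /gk zc_xyz uc_xyz ei den_kk // divff ?gt_eqF ?rho_gt0 //.
  by rewrite scale1r.
Qed.

Lemma projz_ge1 (z : 'rV[R]_1) : proj_z Mset z -> 1 <= z 0 0.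
Proof. by move=> [x [y [H _]]]; rewrite zc_xyz in H. Qed.

Lemma projz_in (z : 'rV[R]_1) : 1 <= z 0 0 -> proj_z Mset z.
Proof.
move=> z1; exists (z 0 0 *: e1 R n), 0; rewrite /Mset /= zc_xyz; split => //.
by move=> k k1; rewrite /gk uc_xyz subrr scaler0; exact: C_0.
Qed.

Lemma sum_abs_ge d (f : 'I_d -> R) j : `|f j| <= \sum_i `|f i|.
Proof. by rewrite (bigD1 j) //= lerDl sumr_ge0. Qed.

Lemma ratrq_int (m : int) (q : rat) : (denq q %| m)%Z ->
  (m%:~R * ratr q : R) \is a Num.int.
Proof.
move=> /dvdzP [c ->].
have -> : (c * denq q)%:~R * ratr q = ratr ((c * numq q)%:~R) :> R.
  rewrite ratr_int !intrM.
  have := congr1 (@ratr R) (numqE q); rewrite rmorphM /= !ratr_int => ->; ring.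
by rewrite ratr_int intr_int.
Qed.

Lemma projz_unbounded : rationally_unbounded (proj_z Mset).
Proof.
move=> d' A b I'.
have [A0|An0] := eqVneq A 0.
  left; exists (\sum_j `|(map_mx ratr b : 'rV[R]_d') 0 j|).
  move=> x [z _ <-] j.
  have -> : (z *m map_mx ratr A + map_mx ratr b) 0 j = (map_mx ratr b : 'rV[R]_d') 0 j.
    rewrite !mxE big1 ?add0r // => k _; rewrite A0 !mxE rmorph0 mulr0 //.
  exact: sum_abs_ge.
right.
pose m : int := \prod_(j < d') denq (A 0 j).
have m0 : 0 < m by apply: prodr_gt0 => j _; exact: denq_gt0.
exists (m%:~R *: map_mx ratr A); split; [|split].
- move=> x lam [z z1 <-] lam0; exists (z + const_mx (lam * m%:~R)).
    apply: projz_in; rewrite !mxE; have := @projz_ge1 z z1.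
    have : 0 <= lam * m%:~R by rewrite mulr_ge0 // ler0z ltW.
    move=> *; lra.
  apply/rowP => j; rewrite !mxE !big_ord1 !mxE; ring.
- apply: contra An0 => /eqP H; apply/eqP/matrixP => i j.
  have := congr1 (fun M : 'M[R]_(1,d') => M i j) H; rewrite !mxE => /eqP.
  rewrite mulf_eq0 intr_eq0 gt_eqF //= fmorph_eq0 => /eqP ->.
  by [].
- move=> j; rewrite !mxE; apply: ratrq_int.
  by rewrite /m (bigD1 j) //= dvdz_mulr.
Qed.

End Reals.

Theorem proposition2 (R : realType) (n : nat) (hn : (0 < n)%N)
  (r : R -> R)
  (r_nonneg : forall z, 0 <= z -> 0 <= r z)
  (r_lt_half : forall z, 0 <= z -> r z < 2^-1)
  (r_incr : forall z w, 0 <= z -> z < w -> r z < r w)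
  (r_concave : forall z w (t : R), 0 <= z -> 0 <= w -> 0 <= t -> t <= 1 ->
      t * r z + (1 - t) * r w <= r (t * z + (1 - t) * w))
  (C : nat -> set 'rV[R]_n)
  (C_closed : forall i, (1 <= i)%N -> closed (C i))
  (C_convex : forall i, (1 <= i)%N -> convex_set (C i))
  (C_0 : forall i, (1 <= i)%N -> C i 0)
  (C_inner : forall i, (1 <= i)%N -> forall x,
      norm2 x <= (r (i.-1)%:R + r (i.+1)%:R) / 2 -> C i x)
  (C_outer : forall i, (1 <= i)%N -> forall x, C i x -> norm2 x <= r i%:R) :
  let S := [set x | exists i, (1 <= i)%N /\ exists c, C i c /\ x = c + i%:R *: e1 R n] in
  rational_MICP_representable S /\
  (forall i j, (1 <= i)%N -> (1 <= j)%N -> i <> j -> forall x,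
     (exists c, C i c /\ x = c + i%:R *: e1 R n) ->
     (exists c, C j c /\ x = c + j%:R *: e1 R n) -> False).
Proof.
move=> S; split.
  exists 0%N, 1%N, (@Mset R r n C); split; last exact: (@projz_unbounded R r n C C_0).
  split; first by apply: Mset_closed.
  split; first by apply: Mset_convex.
  by move=> x; apply: repr_iff.
move=> i j i1 j1 ij x [c [Cc ->]] [c' [Cc' e]].
pose o : 'I_n := Ordinal hn.
have := congr1 (fun v : 'rV[R]_n => v 0 o) e; rewrite !mxE /= mulr1.
have h1 := le_trans (@norm2_coord R n c o) (@C_outer i i1 c Cc).
have h2 := le_trans (@norm2_coord R n c' o) (@C_outer j j1 c' Cc').
have h3 := @r_lt_half i%:R (ler0n _ i); have h4 := @r_lt_half j%:R (ler0n _ j).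
move: h1 h2 h3 h4; set a := c 0 o; set b := c' 0 o.
have [ij'|ji'|eij] := ltngtP i j; last by exfalso; apply: ij.
- have : i%:R + 1 <= j%:R :> R by rewrite natr1 ler_nat.
  move=> H; rewrite !ler_norml => /andP[? ?] /andP[? ?] ? ?; lra.
- have : j%:R + 1 <= i%:R :> R by rewrite natr1 ler_nat.
  move=> H; rewrite !ler_norml => /andP[? ?] /andP[? ?] ? ?; lra.
Qed.
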